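(* Let $n\ge1$ and let $\mathcal{C}$ be the binary $[2^n-1,n]$ simplex code. Then $\mathcal{C}$ is a functional $(s,2^{n-1})$-batch code for every integer $s$ with $1\le s\le\min\{4,2^{n-1}\}$.
   Context: The binary $[2^n-1,n]$ simplex code is the binary linear code whose $n\times(2^n-1)$ generator matrix $\mathbf{G}=[\mathbf{g}_1,\dots,\mathbf{g}_{2^n-1}]$ has as columns all nonzero vectors of $\mathbb{F}_2^n$ (each exactly once). A binary linear code with generator matrix $\mathbf{G}=[\mathbf{g}_1,\dots,\mathbf{g}_N]\in\mathbb{F}_2^{n\times N}$ with nonzero columns is a functional $(s,t)$-batch code ($1\le s\le t$) if for every multiset of request vectors $I=\{\mathbf{v}_1^{(a_1)},\dots,\mathbf{v}_s^{(a_s)}\}$, i.e. nonzero vectors $\mathbf{v}_1,\dots,\mathbf{v}_s\in\mathbb{F}_2^n$ (not necessarily distinct) with multiplicities $a_i\ge1$ and $\sum_i a_i=t$, there exist $t$ pairwise disjoint sets $R_{i,j}\subseteq[N]$ ($i\in[s]$, $j\in[a_i]$) with $\sum_{l\in R_{i,j}}\mathbf{g}_l=\mathbf{v}_i$ for all $i,j$. *)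

(* Defs.v *)
From HB Require Import structures.
From mathcomp Require Import all_boot all_order all_algebra.
Set Implicit Arguments. Unset Strict Implicit. Unset Printing Implicit Defensive.
Import GRing.Theory.
Local Open Scope ring_scope.

(* G is a generator matrix of the binary [2^n-1, n] simplex code:
   N = 2^n - 1 columns, all nonzero, pairwise distinct (hence each
   nonzero vector of F_2^n occurs exactly once). *)
Definition is_simplex_generator (n N : nat) (G : 'M['F_2]_(n, N)) : Prop :=
  N = (2 ^ n - 1)%N /\
  (forall l : 'I_N, col l G != 0) /\
  injective (fun l : 'I_N => col l G).

Definition functional_batch_code (n N : nat) (G : 'M['F_2]_(n, N))
    (s t : nat) : Prop :=
  forall (v : 'I_s -> 'cV['F_2]_n) (a : 'I_s -> nat),
    (forall i, v i != 0) ->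
    (forall i, (1 <= a i)%N) ->
    (\sum_(i < s) a i)%N = t ->
    exists R : 'I_s -> nat -> {set 'I_N},
      (forall (i : 'I_s) (j : nat), (j < a i)%N ->
          \sum_(l in R i j) col l G = v i) /\
      (forall (i i' : 'I_s) (j j' : nat), (j < a i)%N -> (j' < a i')%N ->
          (i, j) != (i', j') -> [disjoint R i j & R i' j']).

(* Main.v *)
Require Import Defs.
From mathcomp Require Import all_boot all_order all_algebra zify.
Set Implicit Arguments. Unset Strict Implicit. Unset Printing Implicit Defensive.
Import GRing.Theory.
Local Open Scope ring_scope.

Notation F2 := 'F_2.
Lemma char2 : (2 \in [char F2])%R. Proof. exact: pchar_Fp. Qed.
Lemma addxx (a : F2) : a + a = 0. Proof. by rewrite (addrr_pchar2 char2). Qed.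
Lemma mx_addxx m n (A : 'M[F2]_(m,n)) : A + A = 0.
Proof. by apply/matrixP=> i j; rewrite !mxE addxx. Qed.
Lemma mx_addK m n (A B : 'M[F2]_(m,n)) : A + B + B = A.
Proof. by rewrite -addrA mx_addxx addr0. Qed.
Lemma mx_eq_add m n (A B : 'M[F2]_(m,n)) : (A + B == 0) = (A == B).
Proof.
apply/eqP/eqP => [h|->]; last exact: mx_addxx.
by rewrite -(mx_addK A B) h add0r.
Qed.
Lemma F2_cases (a : F2) : a = 0 \/ a = 1.
Proof. by case: a => [[|[|//]]] /= H; [left|right]; apply/val_inj. Qed.
Lemma mx11_nz (t : 'M[F2]_1) : t != 0 -> t = 1%:M.
Proof.
rewrite [t]mx11_scalar; case: (F2_cases (t 0 0)) => ->; first by rewrite raddf0 eqxx.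
by [].
Qed.
Lemma card_cV n : #|{: 'cV[F2]_n}| = (2 ^ n)%N.
Proof. by rewrite card_mx card_Fp // muln1. Qed.

Definition Fam n s (P : {set 'cV[F2]_n} -> bool) (v : 'I_s -> 'cV[F2]_n) (a : 'I_s -> nat) :=
  exists R : 'I_s -> nat -> {set 'cV[F2]_n},
   (forall i j, (j < a i)%N -> P (R i j) /\ \sum_(x in R i j) x = v i) /\
   (forall i i' j j', (j < a i)%N -> (j' < a i')%N -> (i, j) != (i', j') ->
       [disjoint R i j & R i' j']).

Lemma sum_sub_le (I : finType) (P1 P2 : pred I) (F : I -> nat) i :
  (forall x, P1 x -> P2 x) -> P2 i -> ~~ P1 i ->
  (\sum_(x | P1 x) F x + F i <= \sum_(x | P2 x) F x)%N.
Proof.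
move=> sub P2i nP1i; rewrite (bigD1 i P2i) /= addnC leq_add2l.
rewrite [X in (_ <= X)%N](bigID P1) /=; apply: leq_trans (leq_addr _ _).
rewrite leq_eqVlt; apply/orP; left; apply/eqP; apply: eq_bigl => x.
apply/idP/idP; last by case/andP=> /andP[].
move=> P1x; rewrite P1x sub //= andbT; apply/negP => /eqP exi; by rewrite -exi P1x in nP1i.
Qed.

Lemma Fam_pullback n s s' (P : {set 'cV[F2]_n} -> bool) (v : 'I_s -> 'cV[F2]_n) a
   (v' : 'I_s' -> 'cV[F2]_n) a' (h : 'I_s -> 'I_s') :
  (forall i, (0 < a i)%N -> v i = v' (h i)) ->
  (forall j, (\sum_(i | h i == j) a i <= a' j)%N) ->
  Fam P v' a' -> Fam P v a.
Proof.
move=> hv ha [R' [R'P R'd]].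
pose off (i : 'I_s) := (\sum_(i' : 'I_s | (i' < i)%N && (h i' == h i)) a i')%N.
have c1 i : (off i + a i <= a' (h i))%N.
  apply: leq_trans (ha (h i)); apply: sum_sub_le => [x /andP[] //||] /=.
    by rewrite eqxx. by rewrite ltnn.
have c2 (i i' : 'I_s) : (i < i')%N -> h i = h i' -> (off i + a i <= off i')%N.
  move=> lt hh; rewrite /off -hh; apply: sum_sub_le => [x /andP[lx ->]||] /=.
  - by rewrite andbT (ltn_trans lx lt).
  - by rewrite lt eqxx.
  - by rewrite ltnn.
exists (fun i j => R' (h i) (off i + j)); split.
  move=> i j lj; have [] := R'P (h i) (off i + j); first by rewrite (leq_trans _ (c1 i)) // ltn_add2l.
  by move=> HP HS; split => //; rewrite HS hv //; apply: leq_ltn_trans lj.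
move=> i i' j j' lj lj' ne.
have l1 : (off i + j < a' (h i))%N by rewrite (leq_trans _ (c1 i)) // ltn_add2l.
have l2 : (off i' + j' < a' (h i'))%N by rewrite (leq_trans _ (c1 i')) // ltn_add2l.
apply: R'd => //; apply: contraNneq ne; case=> hh e.
have [lt|gt|eq] := ltngtP i i'.
- have := c2 _ _ lt hh; lia.
- have := c2 _ _ gt (esym hh); lia.
- have eii : i = i' by apply: val_inj.
  by subst i'; rewrite eqE /= eqxx /=; apply/eqP; lia.
Qed.

Lemma Fam_map n n' s (P : {set 'cV[F2]_n} -> bool) (P' : {set 'cV[F2]_n'} -> bool)
   (f : 'cV[F2]_n -> 'cV[F2]_n') (v : 'I_s -> 'cV[F2]_n) (w : 'I_s -> 'cV[F2]_n') a :
  injective f ->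
  (forall S, P S -> P' [set f x | x in S]) ->
  (forall i S, (0 < a i)%N -> P S -> \sum_(x in S) x = v i -> \sum_(x in S) f x = w i) ->
  Fam P v a -> Fam P' w a.
Proof.
move=> finj hP hS [R [RP Rd]].
exists (fun i j => [set f x | x in R i j]); split.
  move=> i j lj; have [h1 h2] := RP i j lj; split; first exact: hP.
  rewrite big_imset /=; last by move=> x y _ _; apply: finj.
  by apply: hS h1 h2; apply: leq_ltn_trans lj.
by move=> i i' j j' lj lj' ne; rewrite imset_disjoint //; apply: Rd.
Qed.

Lemma Fam_weaken n s (P P' : {set 'cV[F2]_n} -> bool) v (a : 'I_s -> nat) :
  (forall S, P S -> P' S) -> Fam P v a -> Fam P' v a.
Proof. by move=> h [R [RP Rd]]; exists R; split=> // i j lj; have [] := RP i j lj; split; auto. Qed.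

Lemma Fam_union n s (P : {set 'cV[F2]_n} -> bool) (X Y : {set 'cV[F2]_n}) v (a1 a2 : 'I_s -> nat) :
  [disjoint X & Y] ->
  Fam (fun S => P S && (S \subset X)) v a1 ->
  Fam (fun S => P S && (S \subset Y)) v a2 ->
  Fam P v (fun i => a1 i + a2 i)%N.
Proof.
move=> dXY [R1 [R1P R1d]] [R2 [R2P R2d]].
exists (fun i j => if (j < a1 i)%N then R1 i j else R2 i (j - a1 i)%N); split.
  move=> i j lj; case: ifP => lj1.
    by have [/andP[]] := R1P i j lj1.
  move/negbT: lj1; rewrite -leqNgt => lj1.
  have [/andP[]] := R2P i (j - a1 i)%N ltac:(lia); done.
move=> i i' j j' lj lj' ne.
have sub1 i0 j0 : (j0 < a1 i0)%N -> R1 i0 j0 \subset X by move=> h; have [/andP[]] := R1P i0 j0 h.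
have sub2 i0 j0 : (j0 < a2 i0)%N -> R2 i0 j0 \subset Y by move=> h; have [/andP[]] := R2P i0 j0 h.
case: ifP => l1; case: ifP => l2.
- by apply: R1d.
- apply: disjointWl (sub1 _ _ l1) _; apply: disjointWr (sub2 i' (j' - a1 i')%N ltac:(lia)) _; exact: dXY.
- apply: disjointWl (sub2 i (j - a1 i)%N ltac:(lia)) _; apply: disjointWr (sub1 _ _ l2) _; rewrite disjoint_sym; exact: dXY.
- move/negbT: l1; move/negbT: l2; rewrite -!leqNgt => l2 l1.
  apply: R2d; try lia. apply: contraNneq ne; case=> ei e; subst i'; apply/eqP; congr pair; lia.
Qed.

Lemma transport_exists k (phi : 'rV[F2]_(1 + k)) : phi != 0 ->
  exists E : 'M[F2]_(1 + k), E \in unitmx /\ forall x : 'cV[F2]_(1 + k), usubmx (E *m x) = phi *m x.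
Proof.
move=> nz; exists (row_ebase phi); split; first exact: row_ebase_unit.
have e := mulmx_ebase phi; rewrite rank_rV nz /= in e.
have hC : col_ebase phi = 1%:M.
  apply: mx11_nz; apply/eqP => h; have := col_ebase_unit phi; rewrite h unitmxE det0.
  by rewrite unitr0.
rewrite hC mul1mx in e.
have hp : (pid_mx 1 : 'M[F2]_(1, 1 + k)) = row_mx 1%:M 0 by rewrite pid_mx_row.
rewrite hp -[row_ebase phi]vsubmxK mul_row_col mul0mx addr0 mul1mx in e.
by move=> x; rewrite -mul_usub_mx e.
Qed.

Lemma Fam_transport n s (P : {set 'cV[F2]_n} -> bool) (E : 'M[F2]_n) v (a : 'I_s -> nat) :
  E \in unitmx ->
  (forall S, P S -> P [set invmx E *m x | x in S]) ->
  Fam P (fun i => E *m v i) a -> Fam P v a.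
Proof.
move=> uE hP; apply: (@Fam_map _ _ _ _ _ (mulmx (invmx E))) => //.
  by move=> x y /(congr1 (mulmx E)); rewrite !mulKVmx.
by move=> i S _ _ hS; rewrite -mulmx_sumr hS mulKmx.
Qed.

Definition colmat n m (x : 'I_m -> 'cV[F2]_n) : 'M[F2]_(n, m) := \matrix_(i, r) x r i 0.

Lemma exists_phi n m (x : 'I_m -> 'cV[F2]_n) : (\rank (colmat x) < n)%N ->
  exists phi : 'rV[F2]_n, phi != 0 /\ forall r, phi *m x r = 0.
Proof.
move=> hr; set K := kermx (colmat x).
have rK : (0 < \rank K)%N by rewrite mxrank_ker subn_gt0.
have [i nzi] : exists i, row i K != 0.
  apply/existsP; apply: contraTT rK; rewrite negb_exists => /forallP h.
  have -> : K = 0 by apply/row_matrixP => i; rewrite row0; apply/eqP; move: (h i); rewrite negbK.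
  by rewrite mxrank0.
exists (row i K); split => // r.
have e : row i K *m colmat x = 0 by rewrite -row_mul mulmx_ker row0.
have -> : x r = col r (colmat x) by apply/matrixP => p q; rewrite !mxE ord1.
by rewrite !colE mulmxA e mul0mx.
Qed.

Lemma colmat_mul n m (x : 'I_m -> 'cV[F2]_n) (e : {set 'I_m}) :
  colmat x *m (\col_r (r \in e)%:R) = \sum_(r in e) x r.
Proof.
apply/matrixP => i j; rewrite !mxE summxE [RHS]big_mkcond /=; apply: eq_bigr => r _.
by rewrite !mxE ord1; case: (r \in e); rewrite ?mulr1 ?mulr0.
Qed.

Lemma dep_rank n m (x : 'I_m -> 'cV[F2]_n) (e : {set 'I_m}) :
  e != set0 -> \sum_(r in e) x r = 0 -> (\rank (colmat x) < m)%N.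
Proof.
move=> ne hs; rewrite -mxrank_tr ltnNge row_leq_rank; apply/negP => rf.
have := mulmx_free_eq0 (\col_r (r \in e)%:R)^T rf.
rewrite -trmx_mul colmat_mul hs trmx0 eqxx => /esym /eqP h.
have [r re] := set0Pn _ ne.
by move/matrixP: h => /(_ 0 r); rewrite !mxE re => /eqP; rewrite oner_eq0.
Qed.



Lemma sum_col_mx (I : finType) (A : pred I) k1 k2 (f : I -> 'cV[F2]_k1) (g : I -> 'cV[F2]_k2) :
  \sum_(i in A) col_mx (f i) (g i) = col_mx (\sum_(i in A) f i) (\sum_(i in A) g i).
Proof.
elim/big_rec3: _ => [|i x y z _ ->]; first by rewrite col_mx0.
by rewrite add_col_mx.
Qed.

Lemma top_cases k (x : 'cV[F2]_(1 + k)) :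
  x = col_mx 0 (dsubmx x) \/ x = col_mx 1%:M (dsubmx x).
Proof.
have [h|h] := eqVneq (usubmx x) 0.
  by left; rewrite -h vsubmxK.
by right; rewrite -(mx11_nz h) vsubmxK.
Qed.

Lemma top_phi k (x : 'cV[F2]_(1 + k)) : usubmx x = 0 -> x = col_mx 0 (dsubmx x).
Proof. by move=> h; rewrite -h vsubmxK. Qed.

Lemma top_phi1 k (x : 'cV[F2]_(1 + k)) : usubmx x != 0 -> x = col_mx 1%:M (dsubmx x).
Proof. by move=> h; rewrite -(mx11_nz h) vsubmxK. Qed.

Lemma one_neq0 : (1%:M : 'M[F2]_1) != 0.
Proof. by apply/eqP => /matrixP /(_ 0 0); rewrite !mxE eqxx => /eqP; rewrite oner_eq0. Qed.

Lemma col_mx_inj2 k (a b : 'M[F2]_1) (y z : 'cV[F2]_k) : (col_mx a y == col_mx b z) = (a == b) && (y == z).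
Proof.
apply/eqP/andP => [/eq_col_mx [-> ->]|[/eqP -> /eqP ->]] //.
Qed.

Lemma sum_even_top (T : finType) (S : {set T}) : ~~ odd #|S| -> \sum_(x in S) (1%:M : 'M[F2]_1) = 0.
Proof.
rewrite big_const iter_addr addr0 => ev.
rewrite -[#|S|]odd_double_half (negbTE ev) add0n -muln2 mulnC mulrnA.
by rewrite mulr2n mx_addxx mul0rn.
Qed.

Definition pr k (u y : 'cV[F2]_k) : {set 'cV[F2]_(1 + k)} := [set col_mx 0 y; col_mx 1%:M (y + u)].

Lemma pr_card k (u y : 'cV[F2]_k) : #|pr u y| = 2.
Proof.
rewrite cards2 col_mx_inj2 eq_sym.
by rewrite (negbTE one_neq0).
Qed.

Lemma pr_sum k (u y : 'cV[F2]_k) : \sum_(x in pr u y) x = col_mx 1%:M u.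
Proof.
rewrite big_setU1 /=; last by rewrite inE col_mx_inj2 eq_sym (negbTE one_neq0).
rewrite big_set1 add_col_mx add0r addrA mx_addxx add0r //.
Qed.

Lemma pr_nz k (u y : 'cV[F2]_k) : y != 0 -> 0 \notin pr u y.
Proof.
move=> nz; rewrite !inE eq_sym -col_mx0 col_mx_inj2 (negbTE nz) andbF /=.
by rewrite eq_sym col_mx_inj2 (negbTE one_neq0).
Qed.


Lemma pr_disj k (u y z : 'cV[F2]_k) : y != z -> [disjoint pr u y & pr u z].
Proof.
move=> ne; rewrite -setI_eq0; apply/eqP/setP => x; rewrite inE [x \in set0]inE.
apply/negbTE/negP; case/andP; rewrite !inE.
have n10 := one_neq0; have n01 : (0 : 'M[F2]_1) != 1%:M by rewrite eq_sym.
case/orP => /eqP ->; rewrite !col_mx_inj2 ?(negbTE n10) ?(negbTE n01) ?eqxx ?andbF ?orbF ?andTb ?andFb ?orFb.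

- by move=> h; move: ne; rewrite h.
- by move/eqP/addIr => h; move: ne; rewrite h eqxx.
Qed.

Lemma pr_single k (u y : 'cV[F2]_k) : y != 0 -> [disjoint [set col_mx 1%:M u] & pr u y].
Proof.
move=> nz; rewrite disjoints1 !inE !col_mx_inj2.
have n10 := one_neq0; have n01 : (0 : 'M[F2]_1) != 1%:M by rewrite eq_sym.
rewrite (negbTE n10) eqxx andFb orFb andTb.
apply/negP => /eqP h; move/eqP: nz; apply.
by rewrite -(mx_addK y u) -h mx_addxx.
Qed.

Definition Pev n (S : {set 'cV[F2]_n}) := ~~ odd #|S|.
Definition Pnz n (S : {set 'cV[F2]_n}) := 0 \notin S.

Lemma inv_inj n (E : 'M[F2]_n) : E \in unitmx -> injective (mulmx (invmx E) : 'cV[F2]_n -> 'cV[F2]_n).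
Proof. by move=> uE x y /(congr1 (mulmx E)); rewrite !mulKVmx. Qed.

Lemma Pev_inv n (E : 'M[F2]_n) S : E \in unitmx -> Pev S -> Pev [set invmx E *m x | x in S].
Proof. by move=> uE; rewrite /Pev card_imset //; apply: inv_inj. Qed.

Lemma Pnz_inv n (E : 'M[F2]_n) S : E \in unitmx -> Pnz S -> Pnz [set invmx E *m x | x in S].
Proof.
move=> uE; rewrite /Pnz; apply: contra => /imsetP [x xS] /esym h.
have x0 : x = 0 by apply: (inv_inj uE); rewrite h mulmx0.
by rewrite -x0.
Qed.

Lemma reduce_top k s (P : {set 'cV[F2]_(1 + k)} -> bool) (v : 'I_s -> 'cV[F2]_(1 + k)) a
    (phi : 'rV[F2]_(1 + k)) :
  (forall (E : 'M[F2]_(1 + k)) S, E \in unitmx -> P S -> P [set invmx E *m x | x : 'cV[F2]_(1 + k) in S]) ->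
  phi != 0 ->
  (forall E : 'M[F2]_(1 + k), E \in unitmx -> (forall x : 'cV[F2]_(1 + k), usubmx (E *m x) = phi *m x) ->
      Fam P (fun i => E *m v i) a) ->
  Fam P v a.
Proof.
move=> hP nz hE; have [E [uE hx]] := transport_exists nz.
apply: (Fam_transport uE); [by move=> S; apply: hP | exact: hE].
Qed.

Lemma exists_row n (w : 'cV[F2]_n) : w != 0 -> exists phi : 'rV[F2]_n, phi *m w != 0.
Proof.
move=> nz; have [i hi] : exists i, row i w != 0.
  apply/existsP; apply: contraTT nz; rewrite negb_exists => /forallP h.
  rewrite negbK; apply/eqP/row_matrixP => i; rewrite row0; apply/eqP; move: (h i); rewrite negbK //.
by exists (delta_mx 0 i); rewrite -rowE.
Qed.

Lemma size_enum_cV k : size (enum 'cV[F2]_k) = (2 ^ k)%N.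
Proof. by rewrite -cardE card_cV. Qed.

Lemma P1std k (u : 'cV[F2]_k) : Fam (@Pev (1 + k)) (fun _ : 'I_1 => col_mx 1%:M u) (fun _ => 2 ^ k)%N.
Proof.
exists (fun _ j => pr u (nth 0 (enum 'cV[F2]_k) j)); split.
  by move=> i j _; rewrite /Pev pr_card pr_sum.
move=> i i' j j' lj lj' ne; apply: pr_disj.
rewrite nth_uniq ?size_enum_cV ?enum_uniq //.
apply: contraNneq ne => ->; by rewrite !ord1.
Qed.

Lemma singleStd k (u : 'cV[F2]_k) : Fam (@Pnz (1 + k)) (fun _ : 'I_1 => col_mx 1%:M u) (fun _ => 2 ^ k)%N.
Proof.
set ys := enum [set y : 'cV[F2]_k | y != 0].
have sz : size ys = (2 ^ k).-1.
  rewrite /ys; have -> : [set y : 'cV[F2]_k | y != 0] = [set~ 0] by apply/setP => y; rewrite !inE.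
  by rewrite -cardE cardsC1 card_cV.
have ysnz j : (j < size ys)%N -> nth 0 ys j != 0.
  by move=> lj; have := mem_nth 0 lj; rewrite mem_enum inE.
have n10 := one_neq0.
exists (fun _ j => if j is j'.+1 then pr u (nth 0 ys j') else [set col_mx 1%:M u]); split.
  move=> i [|j] lj.
    split; last by rewrite big_set1.
    by rewrite /Pnz inE eq_sym -col_mx0 col_mx_inj2 (negbTE n10).
  have lj' : (j < size ys)%N by rewrite sz; have := expn_gt0 2 k; lia.
  by rewrite /Pnz pr_sum pr_nz // ysnz.
have ei (i i' : 'I_1) : i = i' by rewrite !ord1.
move=> i i' [|j] [|j'] lj lj' ne.
- by move: ne; rewrite (ei i i') eqxx.
- apply: pr_single; apply: ysnz; rewrite sz; have := expn_gt0 2 k; lia.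
- rewrite disjoint_sym; apply: pr_single; apply: ysnz; rewrite sz; have := expn_gt0 2 k; lia.
- apply: pr_disj; rewrite nth_uniq ?enum_uniq ?sz; try (have := expn_gt0 2 k; lia).
  by apply: contraNneq ne => [[->]]; rewrite (ei i i').
Qed.

Lemma Fam_eqa n s (P : {set 'cV[F2]_n} -> bool) v (a a' : 'I_s -> nat) :
  (forall i, a i = a' i) -> Fam P v a -> Fam P v a'.
Proof.
move=> e [R [RP Rd]]; exists R; split => [i j|i i' j j'].
  by rewrite -e; exact: RP.
by rewrite -!e; exact: Rd.
Qed.

Lemma P1gen k (w : 'cV[F2]_(1 + k)) : w != 0 -> Fam (@Pev (1 + k)) (fun _ : 'I_1 => w) (fun _ => 2 ^ k)%N.
Proof.
move=> nz; have [phi hphi] := exists_row nz.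
have nzphi : phi != 0 by apply: contraNneq hphi => ->; rewrite mul0mx.
apply: (reduce_top (phi := phi)) => //; first by move=> E S uE; apply: Pev_inv.
move=> E uE hE; have : usubmx (E *m w) != 0 by rewrite hE.
move/top_phi1 => ->; exact: P1std.
Qed.

Lemma singleGen k (w : 'cV[F2]_(1 + k)) : w != 0 -> Fam (@Pnz (1 + k)) (fun _ : 'I_1 => w) (fun _ => 2 ^ k)%N.
Proof.
move=> nz; have [phi hphi] := exists_row nz.
have nzphi : phi != 0 by apply: contraNneq hphi => ->; rewrite mul0mx.
apply: (reduce_top (phi := phi)) => //; first by move=> E S uE; apply: Pnz_inv.
move=> E uE hE; have : usubmx (E *m w) != 0 by rewrite hE.
move/top_phi1 => ->; exact: singleStd.
Qed.

Lemma sum2 s (b : 'I_s -> nat) (p q : 'I_s) :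
  (forall i, i != p -> i != q -> b i = 0%N) ->
  (\sum_i b i = b p + (if q != p then b q else 0))%N.
Proof.
move=> hb; rewrite (bigD1 p) //=; congr addn.
case: ifP => qp.
  rewrite (bigD1 q) //= big1 ?addn0 // => i /andP[ip iq]; exact: hb.
by rewrite big1 // => i ip; apply: hb => //; apply: contraNneq ip => ->; rewrite (negbFE qp).
Qed.

Lemma combine k s (P : {set 'cV[F2]_(1 + k)} -> bool) (Pb : {set 'cV[F2]_k} -> bool)
   (v : 'I_s -> 'cV[F2]_(1 + k)) (w : 'I_s -> 'cV[F2]_k) (c d : 'I_s -> nat) :
  (forall i, (0 < c i + d i)%N -> v i = col_mx 0 (w i)) ->
  (forall S, Pb S -> P [set col_mx 0 x | x in S]) ->
  (forall S, Pev S -> P [set col_mx 1%:M x | x in S]) ->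
  Fam Pb w c -> Fam (@Pev k) w d -> Fam P v (fun i => c i + d i)%N.
Proof.
move=> hv hb ht Fb Ft.
pose X := [set x : 'cV[F2]_(1 + k) | usubmx x == 0].
have n10 := one_neq0.
apply: (@Fam_union _ _ _ X (~: X)); first by rewrite -subsets_disjoint.
- apply: (Fam_map (f := col_mx 0)) Fb.
  + by move=> x y /eq_col_mx [].
  + move=> S PS; rewrite hb //=; apply/subsetP => x /imsetP [y _ ->].
    by rewrite inE col_mxKu.
  + move=> i S ci PS hS; rewrite hv ?(leq_trans ci) ?leq_addr //.
    by rewrite sum_col_mx hS big1 // => x _.
- apply: (Fam_map (f := col_mx 1%:M)) Ft.
  + by move=> x y /eq_col_mx [].
  + move=> S PS; rewrite ht //=; apply/subsetP => x /imsetP [y _ ->].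
    by rewrite !inE col_mxKu.
  + move=> i S di PS hS; rewrite hv ?(leq_trans di) ?leq_addl //.
    by rewrite sum_col_mx hS sum_even_top.
Qed.


Lemma Fam_single n s (P : {set 'cV[F2]_n} -> bool) (w : 'I_s -> 'cV[F2]_n) b i0 N :
  (forall i, i != i0 -> b i = 0%N) -> (b i0 <= N)%N ->
  Fam P (fun _ : 'I_1 => w i0) (fun _ => N) -> Fam P w b.
Proof.
move=> hb hN F; apply: (Fam_pullback (h := fun _ => ord0)) F.
  move=> i bi; case: (eqVneq i i0) => [-> //|ne].
  by move: bi; rewrite hb.
move=> j.
have -> : (\sum_(i | ord0 == j) b i = \sum_i b i)%N by apply: eq_bigl => i; rewrite [j]ord1 eqxx.
rewrite (bigD1 i0) //=.
have -> : (\sum_(i | i != i0) b i = 0)%N by apply: big1 => i; exact: hb.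
by rewrite addn0.
Qed.

Lemma even_mod n : ~~ odd n -> (n %% 2 = 0)%N.
Proof. by move=> h; rewrite modn2 (negbTE h). Qed.

Lemma mod_even n : (n %% 2 = 0)%N -> ~~ odd n.
Proof. by rewrite modn2; case: (odd n). Qed.

Lemma P2 k : (0 < k)%N -> forall s (w : 'I_s -> 'cV[F2]_(1 + k)) (b : 'I_s -> nat) (p q : 'I_s),
  (forall i, i != p -> i != q -> b i = 0%N) -> (forall i, ~~ odd (b i)) ->
  (forall i, (0 < b i)%N -> w i != 0) -> (\sum_i b i = 2 ^ k)%N -> Fam (@Pev (1 + k)) w b.
Proof.
elim: k => [//|k IH] _ s w b p q hsupp hev hnz hsum.
have hs2 := sum2 hsupp; rewrite hsum in hs2.
case: (posnP k) => [k0|kpos].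
- subst k.
  have [i0 [hi0 hb0]] : exists i0, b i0 = 2%N /\ forall i, i != i0 -> b i = 0%N.
    have ep := even_mod (hev p); have eq := even_mod (hev q).
    case: (eqVneq q p) hs2 => [eqp|nqp] /= hs2.
      exists p; split; first by lia.
      by move=> i ip; apply: hsupp => //; rewrite eqp.
    case: (posnP (b p)) => bp0.
      exists q; split; first by lia.
      move=> i iq; case: (eqVneq i p) => [->//|ip]; exact: hsupp.
    exists p; split; first by lia.
    move=> i ip; case: (eqVneq i q) => [->|iq]; last exact: hsupp.
    by lia.
  apply: (Fam_single (i0 := i0) (N := (2 ^ 1)%N)); first exact: hb0.
    by rewrite hi0.
  apply: P1gen; apply: hnz; by rewrite hi0.
pose x : 'I_2 -> 'cV[F2]_(1 + k.+1) := fun i => if i == ord0 then w p else w q.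
have [phi [nzphi hphi]] : exists phi : 'rV[F2]_(1 + k.+1), phi != 0 /\ forall r, phi *m x r = 0.
  apply: exists_phi; apply: leq_ltn_trans (rank_leq_col _) _; lia.
have hwp : phi *m w p = 0 by have := hphi ord0.
have hwq : phi *m w q = 0 by have := hphi (@Ordinal 2 1 isT).
apply: (reduce_top (phi := phi)) => //; first by move=> E S uE; apply: Pev_inv.
move=> E uE hE.
pose w' i : 'cV[F2]_(1 + k) := dsubmx (E *m w i).
pose H := (2 ^ k)%N.
have hH : H = (2 * 2 ^ k.-1)%N by rewrite /H -expnS prednK.
pose c i := if i == p then minn (b p) H else if i == q then (H - minn (b p) H)%N else 0%N.
pose d i := (b i - c i)%N.
have ep := even_mod (hev p); have eq := even_mod (hev q).
have cle i : (c i <= b i)%N.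
  rewrite /c; case: (eqVneq i p) => [->|ip]; first exact: geq_minl.
  case: (eqVneq i q) => [eiq|iq] //; subst i.
  move: hs2; rewrite ip expnS -/H => hs2; lia.
have csupp i : i != p -> i != q -> c i = 0%N by rewrite /c => /negbTE -> /negbTE ->.
have dsupp i : i != p -> i != q -> d i = 0%N by move=> ip iq; rewrite /d hsupp.
have csum : (\sum_i c i = H)%N.
  rewrite (sum2 csupp) /c eqxx.
  case: (eqVneq q p) hs2 => [eqp|nqp] /= hs2; rewrite expnS -/H in hs2; first by lia.
  rewrite ?eqxx /=; lia.
have dsum : (\sum_i d i = H)%N.
  rewrite /d sumnB; last by move=> i _; exact: cle.
  by rewrite hsum csum expnS -/H; lia.
have cev i : ~~ odd (c i).
  apply: mod_even; rewrite /c; case: (i == p); first by lia.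
  case: (i == q); lia.
have dev i : ~~ odd (d i).
  have := even_mod (hev i); have := even_mod (cev i); have := cle i; rewrite /d; lia.
have htop i : (0 < b i)%N -> E *m w i = col_mx 0 (w' i).
  move=> bi; apply: top_phi; rewrite hE.
  case: (eqVneq i p) => [->//|ip]; case: (eqVneq i q) => [->//|iq].
  by rewrite hsupp in bi.
have hnz' i : (0 < b i)%N -> w' i != 0.
  move=> bi; apply/eqP => h0; move/eqP: (hnz i bi); apply.
  by rewrite -(mulKmx uE (w i)) (htop i bi) h0 col_mx0 mulmx0.
apply: (Fam_eqa (a := fun i => c i + d i)%N).
  by move=> i; rewrite /d subnKC.
apply: (combine (w := w')).
- move=> i cd; apply: htop; by rewrite /d subnKC in cd.
- move=> S PS; rewrite /Pev card_imset; first exact: PS. by move=> y z /eq_col_mx [].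
- move=> S PS; rewrite /Pev card_imset; first exact: PS. by move=> y z /eq_col_mx [].
- apply: (IH kpos _ _ _ p q csupp cev) => //.
  move=> i ci; apply: hnz'; exact: leq_trans ci (cle i).
- apply: (IH kpos _ _ _ p q dsupp dev) => //.
  move=> i di; apply: hnz'; apply: leq_trans di _; rewrite /d leq_subr //.
Qed.


Definition xorl (e1 e2 : seq bool) := [seq xorb x.1 x.2 | x <- zip e1 e2].
Definition xorsum m (g : seq (seq bool)) := foldr xorl (nseq m false) g.
Definition unitm m (r : nat) := mkseq (fun t => t == r) m.

Section Cert.
Variables (n m : nat) (u : 'I_m -> 'cV[F2]_n).

Definition comb (e : seq bool) : 'cV[F2]_n := \sum_(r < m) (nth false e r)%:R *: u r.

Lemma natr_xorb (a b : bool) : ((xorb a b)%:R : F2) = a%:R + b%:R.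
Proof. by case: a; case: b; rewrite ?addr0 ?add0r ?addxx. Qed.

Lemma size_xorl e1 e2 : size (xorl e1 e2) = minn (size e1) (size e2).
Proof. by rewrite size_map size_zip. Qed.

Lemma nth_xorl e1 e2 r : size e1 = size e2 ->
  nth false (xorl e1 e2) r = xorb (nth false e1 r) (nth false e2 r).
Proof.
move=> se; case: (ltnP r (size e1)) => lr.
  rewrite (nth_map (false, false)) ?size_zip ?se ?minnn -?se //.
  by rewrite nth_zip.
rewrite !nth_default // ?size_xorl ?se ?minnn -?se //.
Qed.

Lemma comb_xor e1 e2 : size e1 = m -> size e2 = m -> comb (xorl e1 e2) = comb e1 + comb e2.
Proof.
move=> s1 s2; rewrite /comb -big_split; apply: eq_bigr => r _ /=.
by rewrite nth_xorl ?s1 ?s2 // natr_xorb scalerDl.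
Qed.

Lemma comb0 : comb (nseq m false) = 0.
Proof. by rewrite /comb big1 // => r _; rewrite nth_nseq if_same scale0r. Qed.

Lemma xorsum_spec g : all (fun e => size e == m) g ->
  size (xorsum m g) = m /\ comb (xorsum m g) = \sum_(e <- g) comb e.
Proof.
elim: g => [|e g IH] /=; first by rewrite size_nseq big_nil comb0.
case/andP => /eqP se /IH [sg cg]; rewrite big_cons size_xorl se sg minnn; split => //.
by rewrite comb_xor // cg.
Qed.

Lemma comb_unit (r : 'I_m) : comb (unitm m r) = u r.
Proof.
rewrite /comb (bigD1 r) //= big1 ?addr0.
  by rewrite nth_mkseq // eqxx scale1r.
move=> t tr; rewrite nth_mkseq //.
have -> : (nat_of_ord t == nat_of_ord r) = false by apply/negbTE.
by rewrite scale0r.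
Qed.

Definition indep := forall E : {set 'I_m}, \sum_(r in E) u r = 0 -> E = set0.

Lemma comb_set e : comb e = \sum_(r in [set r : 'I_m | nth false e r]) u r.
Proof.
rewrite /comb [RHS]big_mkcond; apply: eq_bigr => r _; rewrite inE.
by case: (nth false e r); rewrite ?scale1r ?scale0r.
Qed.

Hypothesis hind : indep.

Lemma comb_nz e : size e = m -> has id e -> comb e != 0.
Proof.
move=> se he; apply/eqP; rewrite comb_set => /hind /setP h.
move/hasP: he => [b] /(nthP false) [t lt <-]; apply/negP.
rewrite se in lt; have := h (Ordinal lt); rewrite !inE /= => ->; done.
Qed.

Lemma comb_inj e1 e2 : size e1 = m -> size e2 = m -> comb e1 = comb e2 -> e1 = e2.
Proof.
move=> s1 s2 he.
have h0 : comb (xorl e1 e2) = 0 by rewrite comb_xor // he mx_addxx.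
move: h0; rewrite comb_set => /hind /setP h.
apply: (@eq_from_nth _ false); first by rewrite s1 s2.
move=> t; rewrite s1 => lt; have := h (Ordinal lt); rewrite !inE /=.
by rewrite nth_xorl ?s1 ?s2 //; case: (nth false e1 t); case: (nth false e2 t).
Qed.

Definition okg (r : nat) (g : seq (seq bool)) :=
  [&& all (fun e => (size e == m) && has id e) g, xorsum m g == unitm m r & uniq g].
Definition pos (G : nat -> seq (seq (seq bool))) :=
  flatten [seq [seq (r, j) | j <- iota 0 (size (G r))] | r <- iota 0 m].
Definition grp (G : nat -> seq (seq (seq bool))) (x : nat * nat) := nth [::] (G x.1) x.2.
Definition check G :=
  all (fun r => all (okg r) (G r)) (iota 0 m) &&
  all (fun x => all (fun y => (x == y) || ~~ has (fun e => e \in grp G y) (grp G x)) (pos G)) (pos G).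

Lemma pos_mem (G : nat -> seq (seq (seq bool))) (r : 'I_m) j : (j < size (G r))%N -> (nat_of_ord r, j) \in pos G.
Proof.
move=> lj; apply/flatten_mapP; exists (nat_of_ord r); first by rewrite mem_iota /=.
by apply/mapP; exists j => //; rewrite mem_iota.
Qed.

Lemma cert (G : nat -> seq (seq (seq bool))) : check G -> Fam (@Pnz n) u (fun r => size (G r)).
Proof.
case/andP => /allP h1 /allP h2.
have hok (r : 'I_m) j : (j < size (G r))%N -> okg r (grp G (nat_of_ord r, j)).
  move=> lj; have := h1 r; rewrite mem_iota /= => /(_ (ltn_ord r)) /allP; apply.
  exact: mem_nth.
exists (fun r j => [set x | x \in map comb (grp G (nat_of_ord r, j))]); split.
  move=> r j lj; have /and3P [/allP ha /eqP hx hu] := hok r j lj.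
  have hs : all (fun e => size e == m) (grp G (nat_of_ord r, j)).
    by apply/allP => e /ha /andP [].
  split.
    rewrite /Pnz inE; apply/mapP => [[e ee /esym]]; apply/eqP.
    by have /andP [/eqP se he] := ha e ee; apply: comb_nz.
  have hmu : uniq (map comb (grp G (nat_of_ord r, j))).
    rewrite map_inj_in_uniq // => x y xe ye; apply: comb_inj.
    - by have /andP [/eqP] := ha x xe.
    - by have /andP [/eqP] := ha y ye.
  rewrite (eq_bigl (fun x => x \in map comb (grp G (nat_of_ord r, j)))); last by move=> x; rewrite inE.
  rewrite -big_uniq // big_map.
  have [_ <-] := xorsum_spec hs; by rewrite hx comb_unit.
move=> r r' j j' lj lj' ne.
have := h2 _ (pos_mem lj) => /allP /(_ _ (pos_mem lj')).
have ne' : (nat_of_ord r, j) != (nat_of_ord r', j').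
  by apply: contraNneq ne => [[/val_inj -> ->]].
rewrite (negbTE ne') /= => hn.
rewrite -setI_eq0; apply/eqP/setP => x; rewrite !inE; apply/negP => /andP [/mapP [e ee ->] /mapP [e' ee' he]].
have /and3P [/allP ha _ _] := hok r j lj; have /and3P [/allP ha' _ _] := hok r' j' lj'.
have ee2 : e = e'.
  apply: comb_inj => //; [by have /andP [/eqP] := ha e ee | by have /andP [/eqP] := ha' e' ee'].
move/hasP: hn; apply; exists e => //; by rewrite ee2.
Qed.

End Cert.


Definition mk (m : nat) (l : seq nat) : seq bool := mkseq (fun t => t \in l) m.
Definition pr4 (l1 l2 : seq nat) := [:: mk 4 l1; mk 4 l2].
Definition sg4 (r : nat) := [:: mk 4 [:: r]].

Definition G5111 (r : nat) : seq (seq (seq bool)) :=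
  match r with
  | 0 => [:: sg4 0; pr4 [:: 1; 2] [:: 0; 1; 2]; pr4 [:: 1; 3] [:: 0; 1; 3];
             pr4 [:: 2; 3] [:: 0; 2; 3]; pr4 [:: 1; 2; 3] [:: 0; 1; 2; 3]]
  | 1 => [:: sg4 1] | 2 => [:: sg4 2] | 3 => [:: sg4 3]
  | _ => [::] end.
Definition G4211 (r : nat) : seq (seq (seq bool)) :=
  match r with
  | 0 => [:: sg4 0; pr4 [:: 1; 2] [:: 0; 1; 2]; pr4 [:: 2; 3] [:: 0; 2; 3];
             pr4 [:: 1; 2; 3] [:: 0; 1; 2; 3]]
  | 1 => [:: sg4 1; pr4 [:: 0; 3] [:: 0; 1; 3]] | 2 => [:: sg4 2] | 3 => [:: sg4 3]
  | _ => [::] end.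
Definition G3311 (r : nat) : seq (seq (seq bool)) :=
  match r with
  | 0 => [:: sg4 0; pr4 [:: 2; 3] [:: 0; 2; 3]; pr4 [:: 1; 2; 3] [:: 0; 1; 2; 3]]
  | 1 => [:: sg4 1; pr4 [:: 0; 2] [:: 0; 1; 2]; pr4 [:: 0; 3] [:: 0; 1; 3]]
  | 2 => [:: sg4 2] | 3 => [:: sg4 3]
  | _ => [::] end.
Definition G3221 (r : nat) : seq (seq (seq bool)) :=
  match r with
  | 0 => [:: sg4 0; pr4 [:: 1; 2; 3] [:: 0; 1; 2; 3]; pr4 [:: 2; 3] [:: 0; 2; 3]]
  | 1 => [:: sg4 1; pr4 [:: 0; 3] [:: 0; 1; 3]]
  | 2 => [:: sg4 2; pr4 [:: 0; 1] [:: 0; 1; 2]] | 3 => [:: sg4 3]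
  | _ => [::] end.
Definition G2222 (r : nat) : seq (seq (seq bool)) :=
  match r with
  | 0 => [:: sg4 0; pr4 [:: 1; 2] [:: 0; 1; 2]]
  | 1 => [:: sg4 1; pr4 [:: 2; 3] [:: 1; 2; 3]]
  | 2 => [:: sg4 2; pr4 [:: 0; 3] [:: 0; 2; 3]]
  | 3 => [:: sg4 3; pr4 [:: 0; 1] [:: 0; 1; 3]]
  | _ => [::] end.
Definition G211 (r : nat) : seq (seq (seq bool)) :=
  match r with
  | 0 => [:: [:: mk 3 [:: 0]]; [:: mk 3 [:: 1; 2]; mk 3 [:: 0; 1; 2]]]
  | 1 => [:: [:: mk 3 [:: 1]]] | 2 => [:: [:: mk 3 [:: 2]]]
  | _ => [::] end.

Lemma ch1 : check 4 G5111. Proof. by vm_compute. Qed.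
Lemma ch2 : check 4 G4211. Proof. by vm_compute. Qed.
Lemma ch3 : check 4 G3311. Proof. by vm_compute. Qed.
Lemma ch4 : check 4 G3221. Proof. by vm_compute. Qed.
Lemma ch5 : check 4 G2222. Proof. by vm_compute. Qed.
Lemma ch6 : check 3 G211. Proof. by vm_compute. Qed.

Local Open Scope nat_scope.
Lemma B4 n (u : 'I_4 -> 'cV[F2]_n) (c0 c1 c2 c3 : nat) : indep u ->
  (1 <= c3)%N -> (c3 <= c2)%N -> (c2 <= c1)%N -> (c1 <= c0)%N -> (c0 + c1 + c2 + c3 = 8)%N ->
  Fam (@Pnz n) u (fun r => nth 0%N [:: c0; c1; c2; c3] r).
Proof.
move=> hi h3 h32 h21 h10 hs.
have : [/\ c0 = 5, c1 = 1, c2 = 1 & c3 = 1] \/ [/\ c0 = 4, c1 = 2, c2 = 1 & c3 = 1] \/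
          [/\ c0 = 3, c1 = 3, c2 = 1 & c3 = 1] \/ [/\ c0 = 3, c1 = 2, c2 = 2 & c3 = 1] \/
          [/\ c0 = 2, c1 = 2, c2 = 2 & c3 = 2].
  have : c3 <= 2 by lia.
  case: c3 h3 h32 hs => [//|[|[|//]]] _ h32 hs _.
  - have : c2 <= 2 by lia.
    case: c2 h32 h21 hs => [|[|[|//]]] // _ h21 hs _.
    + have : c1 <= 3 by lia.
      case: c1 h21 h10 hs => [|[|[|[|//]]]] // _ h10 hs _.
      * by left; split => //; lia.
      * by right; left; split => //; lia.
      * by right; right; left; split => //; lia.
    + have : c1 <= 2 by lia.
      case: c1 h21 h10 hs => [|[|[|//]]] // _ h10 hs _; try lia.
      by right; right; right; left; split => //; lia.
  - by right; right; right; right; split; lia.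
case=> [[-> -> -> ->]|[[-> -> -> ->]|[[-> -> -> ->]|[[-> -> -> ->]|[-> -> -> ->]]]]].
- apply: Fam_eqa (cert hi ch1); by case=> [[|[|[|[|//]]]] ?].
- apply: Fam_eqa (cert hi ch2); by case=> [[|[|[|[|//]]]] ?].
- apply: Fam_eqa (cert hi ch3); by case=> [[|[|[|[|//]]]] ?].
- apply: Fam_eqa (cert hi ch4); by case=> [[|[|[|[|//]]]] ?].
- apply: Fam_eqa (cert hi ch5); by case=> [[|[|[|[|//]]]] ?].
Qed.

Lemma B3 n (u : 'I_3 -> 'cV[F2]_n) (c0 c1 c2 : nat) : indep u ->
  (1 <= c2)%N -> (c2 <= c1)%N -> (c1 <= c0)%N -> (c0 + c1 + c2 = 4)%N ->
  Fam (@Pnz n) u (fun r => nth 0%N [:: c0; c1; c2] r).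
Proof.
move=> hi h2 h21 h10 hs.
have [-> -> ->] : [/\ c0 = 2, c1 = 1 & c2 = 1] by split; lia.
apply: Fam_eqa (cert hi ch6); by case=> [[|[|[|//]]] ?].
Qed.

Local Open Scope ring_scope.

Lemma caseB n s (v : 'I_s -> 'cV[F2]_n) (a : 'I_s -> nat) :
  (forall i, (a i <= 1)%N) -> (forall i, (0 < a i)%N -> v i != 0) ->
  (forall i j, (0 < a i)%N -> (0 < a j)%N -> v i = v j -> i = j) ->
  Fam (@Pnz n) v a.
Proof.
move=> h1 hnz hinj; exists (fun i _ => [set v i]); split.
  move=> i j lj; split; last by rewrite big_set1.
  by rewrite /Pnz inE eq_sym hnz //; apply: leq_ltn_trans lj.
move=> i i' j j' lj lj' ne; rewrite disjoints1 inE.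
have j0 : j = 0%N by have := h1 i; lia.
have j0' : j' = 0%N by have := h1 i'; lia.
subst; apply/eqP => e; move: ne; rewrite (hinj i' i) ?eqxx //; lia.
Qed.

Lemma caseA k s (v : 'I_s -> 'cV[F2]_(1 + k)) (a : 'I_s -> nat) i0 :
  (forall i, i != i0 -> a i = 0%N) -> (forall i, (0 < a i)%N -> v i != 0) ->
  (\sum_i a i = 2 ^ k)%N -> Fam (@Pnz (1 + k)) v a.
Proof.
move=> h0 hnz hs.
have ha : a i0 = (2 ^ k)%N.
  by rewrite -hs (bigD1 i0) //= big1 ?addn0 // => i; apply: h0.
apply: (Fam_single (i0 := i0) (N := (2 ^ k)%N)); first exact: h0.
  by rewrite ha.
by apply: singleGen; apply: hnz; rewrite ha expn_gt0.
Qed.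

Lemma pull_list n s p (P : {set 'cV[F2]_n} -> bool) (v : 'I_s -> 'cV[F2]_n) (a : 'I_s -> nat)
    (L : seq 'I_s) i0 (U : 'I_p -> 'cV[F2]_n) (Cn : 'I_p -> nat) :
  uniq L -> (forall i, (0 < a i)%N -> i \in L) -> size L = p ->
  (forall r : 'I_p, U r = v (nth i0 L r)) -> (forall r : 'I_p, Cn r = a (nth i0 L r)) ->
  Fam P U Cn -> Fam P v a.
Proof.
move=> uL hL sL hU hC F.
case: (posnP p) => [p0|pp].
  have L0 : L = [::] by apply/size0nil; rewrite sL p0.
  have a0 i : a i = 0%N by case: (posnP (a i)) => // /hL; rewrite L0.
  exists (fun _ _ => set0); split => [i j|i i' j j']; by rewrite a0.
pose r0 : 'I_p := Ordinal pp.
have hidx i : i \in L -> (index i L < p)%N by rewrite -sL index_mem.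
apply: (Fam_pullback (h := fun i => insubd r0 (index i L))) F.
  move=> i ai; rewrite hU val_insubd hidx ?hL // nth_index //; exact: hL.
move=> r; rewrite hC.
have lr : (r < size L)%N by rewrite sL.
have hr : insubd r0 (index (nth i0 L r) L) == r.
  by apply/eqP/val_inj; rewrite val_insubd index_uniq // ltn_ord.
rewrite (bigD1 (nth i0 L r)) //= big1 ?addn0 // => i /andP [hi ne].
case: (posnP (a i)) => // ai; move/eqP: hi => hi; case/negP: ne.
have iL := hL i ai; apply/eqP; rewrite -hi val_insubd hidx // nth_index //.
Qed.

Lemma exmax (T : finType) (P : pred T) (F : T -> nat) x0 :
  P x0 -> exists x, P x /\ forall y, P y -> (F y <= F x)%N.
Proof. move=> Px0; case: (arg_maxnP F Px0) => x Px h; by exists x. Qed.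

Definition Qprop k := forall s (v : 'I_s -> 'cV[F2]_(1 + k)) (a : 'I_s -> nat),
  (s <= 4)%N -> (forall i, (0 < a i)%N -> v i != 0) ->
  (forall i j, (0 < a i)%N -> (0 < a j)%N -> v i = v j -> i = j) ->
  (\sum_i a i = 2 ^ k)%N -> Fam (@Pnz (1 + k)) v a.

Lemma card_pq s (p q : 'I_s) : q != p -> #|[pred i : 'I_s | (i != p) && (i != q)]| = (s - 2)%N.
Proof.
move=> qp.
have h1 := cardD1 p (predT : pred 'I_s).
have h2 := cardD1 q [predD1 predT & p].
rewrite inE /= qp /= in h2.
have -> : #|[pred i : 'I_s | (i != p) && (i != q)]| = #|[predD1 [predD1 predT & p] & q]|.
  by apply: eq_card => i; rewrite !inE andbC andbT.
move: h1; rewrite inE card_ord h2 /= => e; rewrite [in RHS]e; by rewrite !add1n !subSS subn0.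
Qed.

Lemma step1 k : (0 < k)%N -> Qprop k ->
  forall s (v : 'I_s -> 'cV[F2]_(1 + k.+1)) (a : 'I_s -> nat) (phi : 'rV[F2]_(1 + k.+1)) i1 i2 i3,
  (s <= 4)%N -> (forall i, (0 < a i)%N -> v i != 0) ->
  (forall i j, (0 < a i)%N -> (0 < a j)%N -> v i = v j -> i = j) ->
  (\sum_i a i = 2 ^ k.+1)%N -> phi != 0 -> (forall i, (0 < a i)%N -> phi *m v i = 0) ->
  (2 <= a i1)%N -> i2 != i3 -> (0 < a i2)%N -> (0 < a i3)%N ->
  Fam (@Pnz (1 + k.+1)) v a.
Proof.
move=> kpos IH s v a phi i1 i2 i3 hs hnz hinj hsum nzphi hphi a1 i23 a2 a3.
have [p [_ hp]] := @exmax _ predT a i1 isT.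
have ap2 : (2 <= a p)%N by apply: leq_trans a1 (hp _ isT).
have [j0 [j0p j0pos]] : exists j, j != p /\ (0 < a j)%N.
  case: (eqVneq i2 p) => [e2|n2]; last by exists i2.
  by exists i3; split => //; rewrite -e2 eq_sym.
have [q [qp hq]] := @exmax _ (fun i => i != p) a j0 j0p.
have aq1 : (0 < a q)%N by apply: leq_trans j0pos (hq _ j0p).
have aqp : (a q <= a p)%N by apply: hp.
pose R := (\sum_(i | (i != p) && (i != q)) a i)%N.
have hsum2 : (\sum_i a i = a p + (a q + R))%N.
  by rewrite (bigD1 p) //= (bigD1 q) //=.
have hR : (R <= 2 * a q)%N.
  apply: (@leq_trans (\sum_(i | (i != p) && (i != q)) a q)%N).
    by apply: leq_sum => i /andP [ip _]; apply: hq.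
  rewrite (eq_bigl (fun i => i \in [pred i : 'I_s | (i != p) && (i != q)])) //.
  rewrite sum_nat_const card_pq //; apply: leq_mul => //; lia.
pose T := (2 ^ k)%N.
have hT : T = (2 * 2 ^ k.-1)%N by rewrite /T -expnS prednK.
have hT' : (k = 1 /\ 2 ^ k.-1 = 1 \/ 2 ^ k.-1 %% 2 = 0)%N.
  case: k kpos {IH v hnz hinj hsum phi nzphi hphi T hT} => [//|[|k]] _; first by left.
  by right; rewrite /= expnS modnMr.
rewrite hsum2 expnS -/T in hsum.
pose bp := minn (a p - a p %% 2) T.
pose bq := (T - bp)%N.
have hbq : (bq <= a q)%N by rewrite /bq /bp; lia.
have hbp : (bp <= a p)%N by rewrite /bp; lia.
have ebp : (bp %% 2 = 0)%N by rewrite /bp; lia.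
have ebq : (bq %% 2 = 0)%N by rewrite /bq; lia.
have hbpT : (bp <= T)%N by rewrite /bp; lia.
pose b i := if i == p then bp else if i == q then bq else 0%N.
have bsupp i : i != p -> i != q -> b i = 0%N by rewrite /b => /negbTE -> /negbTE ->.
have ble i : (b i <= a i)%N.
  rewrite /b; case: (eqVneq i p) => [->//|ip]; case: (eqVneq i q) => [->//|iq] //.
have bev i : ~~ odd (b i).
  apply: mod_even; rewrite /b; case: (i == p) => //; case: (i == q) => //.
have bsum : (\sum_i b i = T)%N.
  rewrite (sum2 bsupp) qp /b eqxx (negbTE qp) eqxx; rewrite /bq; lia.
apply: (reduce_top (phi := phi)) => //; first by move=> E S uE; apply: Pnz_inv.
move=> E uE hE.
pose w' i : 'cV[F2]_(1 + k) := dsubmx (E *m v i).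
have htop i : (0 < a i)%N -> E *m v i = col_mx 0 (w' i).
  by move=> ai; apply: top_phi; rewrite hE hphi.
have hnz' i : (0 < a i)%N -> w' i != 0.
  move=> ai; apply/eqP => h0; move/eqP: (hnz i ai); apply.
  by rewrite -(mulKmx uE (v i)) (htop i ai) h0 col_mx0 mulmx0.
pose c i := (a i - b i)%N.
have csum : (\sum_i c i = T)%N.
  rewrite /c sumnB; last by move=> i _; exact: ble.
  by rewrite bsum hsum2; lia.
apply: (Fam_eqa (a := fun i => c i + b i)%N).
  by move=> i; rewrite /c subnK.
apply: (combine (Pb := @Pnz (1 + k)) (w := w')).
- move=> i cd; apply: htop; by rewrite /c subnK in cd.
- move=> S; rewrite /Pnz; apply: contra => /imsetP [y yS h].
  have y0 : y = 0 by move/esym: h; rewrite -[X in _ = X]col_mx0 => /eq_col_mx [].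
  by rewrite y0 in yS.
- move=> S _; rewrite /Pnz; apply/imsetP => [[y _ h]].
  move/esym: h; rewrite -[X in _ = X]col_mx0 => /eq_col_mx [h _].
  by move: one_neq0; rewrite h eqxx.
- apply: (IH _ w' c) => //.
  + move=> i ci; apply: hnz'; apply: leq_trans ci _; exact: leq_subr.
  + move=> i j ci cj e; apply: hinj.
    * by apply: leq_trans ci _; exact: leq_subr.
    * by apply: leq_trans cj _; exact: leq_subr.
    rewrite -(mulKmx uE (v i)) -(mulKmx uE (v j)).
    rewrite htop ?(leq_trans ci (leq_subr _ _)) // htop ?(leq_trans cj (leq_subr _ _)) //.
    by rewrite e.
- apply: (P2 kpos (p := p) (q := q)) => //.
  move=> i bi; apply: hnz'; exact: leq_trans bi (ble i).
Qed.


Lemma sum_two s (a : 'I_s -> nat) i j : i != j -> (a i + a j <= \sum_k a k)%N.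
Proof.
move=> ij; rewrite (bigD1 i) //= leq_add2l (bigD1 j) 1?eq_sym //=.
exact: leq_addr.
Qed.

Lemma karith k m : (1 + k <= m)%N -> (m <= 4)%N -> (m < 2 ^ k)%N ->
  k = 2%N /\ m = 3%N \/ k = 3%N /\ m = 4%N.
Proof. case: k => [|[|[|[|k]]]] /=; rewrite ?expnS; lia. Qed.

Lemma spancase k s (v : 'I_s -> 'cV[F2]_(1 + k)) (a : 'I_s -> nat) i1 :
  (s <= 4)%N -> (forall i, (0 < a i)%N -> v i != 0) ->
  (forall i j, (0 < a i)%N -> (0 < a j)%N -> v i = v j -> i = j) ->
  (\sum_i a i = 2 ^ k)%N -> (2 <= a i1)%N ->
  (forall phi : 'rV[F2]_(1 + k), phi != 0 -> exists i, (0 < a i)%N /\ phi *m v i != 0) ->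
  Fam (@Pnz (1 + k)) v a.
Proof.
move=> hs hnz hinj hsum a1 hnophi.
pose supp := [set i | (0 < a i)%N].
pose L := sort (fun i j => a j <= a i)%N (enum supp).
have uL : uniq L by rewrite sort_uniq enum_uniq.
have memL i : (i \in L) = (0 < a i)%N by rewrite mem_sort mem_enum inE.
pose m := size L.
have hm4 : (m <= 4)%N.
  by rewrite /m size_sort -cardE; apply: leq_trans (max_card _) _; rewrite card_ord.
have sumL : (\sum_i a i = \sum_(i <- L) a i)%N.
  rewrite (perm_big _ (permEl (perm_sort _ _))) big_enum /= [LHS](bigID (fun i => 0 < a i)%N) /=.
  rewrite [X in (_ + X)%N]big1 ?addn0; last by move=> i; rewrite lt0n negbK => /eqP.
  by apply: eq_bigl => i; rewrite inE.
have i1L : i1 \in L by rewrite memL; lia.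
have msum : (m < \sum_i a i)%N.
  rewrite sumL.
  have -> : (\sum_(i <- L) a i = \sum_(i <- L) 1 + \sum_(i <- L) (a i - 1))%N.
    rewrite -big_split /= big_seq_cond [RHS]big_seq_cond; apply: eq_bigr => i.
    by rewrite andbT memL; lia.
  rewrite sum1_size -/m -[X in (X < _)%N]addn0 ltn_add2l.
  rewrite (bigD1_seq i1) //=; lia.
have noker p (U : 'I_p -> 'cV[F2]_(1 + k)) :
    (forall i, (0 < a i)%N -> exists r, v i = U r) -> (1 + k <= \rank (colmat U))%N.
  move=> hU; rewrite leqNgt; apply/negP => /exists_phi [phi [nz hphi]].
  have [i [ai hi]] := hnophi phi nz; have [r e] := hU i ai.
  by move: hi; rewrite e hphi eqxx.
have hU i : (0 < a i)%N -> exists r : 'I_m, v i = v (nth i1 L r).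
  move=> ai; have iL : i \in L by rewrite memL.
  have lt : (index i L < m)%N by rewrite /m index_mem.
  by exists (Ordinal lt); rewrite /= nth_index.
have hk : (1 + k <= m)%N.
  apply: leq_trans (noker _ (fun r : 'I_m => v (nth i1 L r)) hU) _; exact: rank_leq_col.
have sorted_L : sorted (fun i j => a j <= a i)%N L.
  by apply: sort_sorted => x y; apply: leq_total.
rewrite hsum in msum.
have hk23 : k = 2%N /\ m = 3%N \/ k = 3%N /\ m = 4%N.
  by apply: karith.
have indep_of p (U : 'I_p -> 'cV[F2]_(1 + k)) : p = (1 + k)%N ->
    (forall i, (0 < a i)%N -> exists r, v i = U r) -> indep U.
  move=> hp hUU E hE; apply/eqP; apply/negPn/negP => nE.
  have := dep_rank nE hE; have := noker _ _ hUU; lia.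
case: hk23 => [[k2 m3]|[k3 m4]].
- subst k.
  have eL : L = [:: nth i1 L 0; nth i1 L 1; nth i1 L 2].
    apply: (@eq_from_nth _ i1); first by rewrite -/m m3.
    by move=> t; rewrite -/m m3; case: t => [|[|[|]]].
  pose U : 'I_3 -> 'cV[F2]_(1 + 2) := fun r => v (nth i1 L r).
  have hi : indep U.
    apply: indep_of => // i ai; have [r e] := hU i ai.
    by rewrite m3 in r e *; exists r.
  have : Fam (@Pnz (1 + 2)) U (fun r => nth 0%N [:: a (nth i1 L 0); a (nth i1 L 1); a (nth i1 L 2)] r).
    move: sorted_L sumL; rewrite hsum {1 2}eL /= big_cons big_cons big_cons big_nil.
    move=> /and3P [s1 s2 _] sL.
    apply: B3 => //; try lia.
    by rewrite -memL (eL) !inE eqxx ?orbT.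
  apply: (pull_list (L := L) (i0 := i1)) => //; first by move=> i; rewrite memL.
  by case=> [[|[|[|]]] ?].
- subst k.
  have eL : L = [:: nth i1 L 0; nth i1 L 1; nth i1 L 2; nth i1 L 3].
    apply: (@eq_from_nth _ i1); first by rewrite -/m m4.
    by move=> t; rewrite -/m m4; case: t => [|[|[|[|]]]].
  pose U : 'I_4 -> 'cV[F2]_(1 + 3) := fun r => v (nth i1 L r).
  have hi : indep U.
    apply: indep_of => // i ai; have [r e] := hU i ai.
    by rewrite m4 in r e *; exists r.
  have : Fam (@Pnz (1 + 3)) U (fun r => nth 0%N [:: a (nth i1 L 0); a (nth i1 L 1); a (nth i1 L 2); a (nth i1 L 3)] r).
    move: sorted_L sumL; rewrite hsum {1 2}eL /= big_cons big_cons big_cons big_cons big_nil.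
    move=> /and4P [s1 s2 s3 _] sL.
    apply: B4 => //; try lia.
    by rewrite -memL (eL) !inE eqxx ?orbT.
  apply: (pull_list (L := L) (i0 := i1)) => //; first by move=> i; rewrite memL.
  by case=> [[|[|[|[|]]]] ?].
Qed.


Lemma Qall k : Qprop k.
Proof.
elim: k => [|k IH] s v a hs hnz hinj hsum.
  apply: caseB => // i; move: hsum; rewrite (bigD1 i) //=; lia.

case: (boolP [forall i, a i <= 1]%N) => [/forallP hb|]; first exact: caseB.
rewrite negb_forall => /existsP [i1]; rewrite -ltnNge => a1.
case: (boolP [exists i2, exists i3, [&& i2 != i3, 0 < a i2 & 0 < a i3]%N]) =>
  [/existsP [i2 /existsP [i3 /and3P [i23 a2 a3]]]|hno]; last first.
  apply: (caseA (i0 := i1)) => // i ii1; case: (posnP (a i)) => // ai.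
  case/negP: hno; apply/existsP; exists i; apply/existsP; exists i1.
  by rewrite ii1 ai /=; lia.
case: (boolP [exists phi : 'rV[F2]_(1 + k.+1),
   (phi != 0) && [forall i, (0 < a i)%N ==> (phi *m v i == 0)]]).
  case/existsP => phi /andP [nzphi /forallP hphi].
  case: (posnP k) => [k0|kpos].
    subst k; exfalso.
    have [j [ji1 aj]] : exists j, j != i1 /\ (0 < a j)%N.
      case: (eqVneq i2 i1) => [e2|n2]; last by exists i2.
      by exists i3; split => //; rewrite -e2 eq_sym.
    have := sum_two a ji1; rewrite hsum; lia.
  apply: (step1 kpos IH (phi := phi) (i1 := i1) (i2 := i2) (i3 := i3)) => //.
  by move=> i ai; apply/eqP; have := hphi i; rewrite ai.
rewrite negb_exists => /forallP hno.
apply: (spancase (i1 := i1)) => // phi nz.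
have := hno phi; rewrite nz /= negb_forall => /existsP [i]; rewrite negb_imply => /andP [ai hi].
by exists i.
Qed.


Lemma merge k s (v : 'I_s -> 'cV[F2]_(1 + k)) (a : 'I_s -> nat) :
  (0 < s)%N -> (s <= 4)%N -> (forall i, v i != 0) -> (\sum_i a i = 2 ^ k)%N ->
  Fam (@Pnz (1 + k)) v a.
Proof.
move=> s0 hs hnz hsum.
pose U := undup (map v (enum 'I_s)).
pose s' := size U.
have vU i : v i \in U by rewrite mem_undup; apply: map_f; rewrite mem_enum.
have s'pos : (0 < s')%N by rewrite /s' lt0n size_eq0; apply/eqP => e; have := vU (Ordinal s0); rewrite e.
pose r0 : 'I_s' := Ordinal s'pos.
have hidx i : (index (v i) U < s')%N by rewrite /s' index_mem.
pose h i : 'I_s' := insubd r0 (index (v i) U).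
have hval i : val (h i) = index (v i) U by rewrite val_insubd hidx.
pose v' (r : 'I_s') := nth 0 U r.
pose a' (r : 'I_s') := (\sum_(i | h i == r) a i)%N.
apply: (Fam_pullback (v' := v') (a' := a') (h := h)) => //.
  by move=> i _; rewrite /v' hval nth_index.
apply: Qall.
- apply: leq_trans hs; rewrite /s' (leq_trans (size_undup _)) // size_map size_enum_ord //.
- move=> r _; have : v' r \in U by rewrite /v' mem_nth.
  by rewrite mem_undup => /mapP [i _ ->].
- move=> r r' _ _ e; apply: val_inj; apply/eqP.
  by rewrite -(nth_uniq 0 (ltn_ord r) (ltn_ord r') (undup_uniq _)); apply/eqP.
- by rewrite -hsum /a' (partition_big h predT) //.
Qed.

Lemma to_code k N (G : 'M[F2]_(1 + k, N)) s (v : 'I_s -> 'cV[F2]_(1 + k)) (a : 'I_s -> nat) :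
  N = (2 ^ (1 + k) - 1)%N -> (forall l, col l G != 0) -> injective (fun l => col l G) ->
  Fam (@Pnz (1 + k)) v a ->
  exists R : 'I_s -> nat -> {set 'I_N},
      (forall (i : 'I_s) (j : nat), (j < a i)%N ->
          \sum_(l in R i j) col l G = v i) /\
      (forall (i i' : 'I_s) (j j' : nat), (j < a i)%N -> (j' < a i')%N ->
          (i, j) != (i', j') -> [disjoint R i j & R i' j']).
Proof.
move=> hN hcol hinj [R [RP Rd]].
have himg : [set col l G | l in 'I_N] = [set x | x != 0].
  apply/eqP; rewrite eqEcard; apply/andP; split.
    by apply/subsetP => x /imsetP [l _ ->]; rewrite inE hcol.
  rewrite card_imset // card_ord hN.
  have -> : [set x : 'cV[F2]_(1 + k) | x != 0] = [set~ 0] by apply/setP => x; rewrite !inE.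
  by rewrite cardsC1 card_cV subn1.
exists (fun i j => [set l | col l G \in R i j]); split.
  move=> i j lj; have [hP hS] := RP i j lj.
  have eI : \sum_(x in [set col l G | l in [set l | col l G \in R i j]]) x =
           \sum_(l in [set l | col l G \in R i j]) col l G.
    by rewrite big_imset //= => x y _ _; apply: hinj.
  rewrite -eI -hS.
  apply: eq_bigl => x; apply/imsetP/idP => [[l]|xR]; first by rewrite inE => h ->.
  have : x \in [set x : 'cV[F2]_(1 + k) | x != 0].
    by rewrite inE; apply: contraNneq hP => <-.
  by rewrite -himg => /imsetP [l _ e]; exists l => //; rewrite inE -e.
move=> i i' j j' lj lj' ne; have dR := Rd i i' j j' lj lj' ne.
rewrite -setI_eq0; apply/eqP/setP => l; rewrite !inE; apply/negP => /andP [h1 h2].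
by move: h2; rewrite (disjointFr dR h1).
Qed.

Local Close Scope ring_scope.
Theorem mainTheorem12 (n N : nat) (G : 'M['F_2]_(n, N)) :
  (1 <= n)%N ->
  is_simplex_generator G ->
  forall s : nat, (1 <= s)%N -> (s <= minn 4 (2 ^ n.-1))%N ->
    functional_batch_code G s (2 ^ n.-1).
Proof.
case: n G => [//|k] G _ [hN [hcol hinj]] s s1 hs v a hv ha hsum.
have hs4 : (s <= 4)%N by move: hs; rewrite leq_min => /andP [].
apply: (@to_code k N G) => //.
apply: merge => //.
Qed.
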